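(* Let $K_1,K_2$ be two $q$-edge-colored ordered complete graphs, and let $S\subseteq[q]$ be an arbitrary set of colors. Let $L_1,L_2$ be the lengths of the longest monotone $S$-colored paths in $K_1,K_2$ respectively. Then the length of the longest $S$-colored monotone path in $K_1\otimes K_2$ is exactly $L_1L_2$.
   Context: An ordered complete graph is a complete graph with a linear order on its vertices; colors are from $[q]$. A path $v_1,\dots,v_L$ is monotone if $v_1<\dots<v_L$; its length is its number of vertices; it is $S$-colored if every edge of it has a color in $S$. The lexicographic product $K_1\otimes K_2$ is the $q$-edge-colored ordered complete graph on vertex set $V(K_2)\times V(K_1)$, ordered lexicographically with the $K_2$-coordinate compared first, where the edge between $(u,x)$ and $(w,y)$ receives the color of $uw$ in $K_2$ if $u\neq w$, and the color of $xy$ in $K_1$ if $u=w$. *)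

(* Defs.v *)
From mathcomp Require Import all_boot all_order.
Set Implicit Arguments. Unset Strict Implicit. Unset Printing Implicit Defensive.

(* A q-edge-colored ordered complete graph on vertex type T: a strict
   linear order [lt] on T and a colour function [c]; the colour of the edge
   {u,w} with u < w is [c u w] (the value of c on other pairs is irrelevant,
   since it is only ever queried with the smaller vertex first). *)

(* p is a monotone S-colored path: strictly increasing, and every edge
   between consecutive vertices has a colour in S. Its length = size p. *)
Definition mono_S_path (T : Type) (q : nat) (lt : rel T)
    (c : T -> T -> 'I_q) (S : {set 'I_q}) (p : seq T) : bool :=
  sorted lt p && all (fun e => c e.1 e.2 \in S) (zip p (behead p)).

Definition longest_mono_S (T : Type) (q : nat) (lt : rel T)
    (c : T -> T -> 'I_q) (S : {set 'I_q}) (L : nat) : Prop :=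
  (exists p, mono_S_path lt c S p /\ size p = L) /\
  (forall p, mono_S_path lt c S p -> size p <= L).

Definition ord_lt (n : nat) : rel 'I_n := fun i j => (i < j)%N.

Definition lex_lt (n2 n1 : nat) : rel ('I_n2 * 'I_n1) :=
  fun a b => ((a.1 < b.1)%N || ((a.1 == b.1) && (a.2 < b.2)%N)).

Definition lex_col (q n1 n2 : nat) (c1 : 'I_n1 -> 'I_n1 -> 'I_q)
    (c2 : 'I_n2 -> 'I_n2 -> 'I_q) (a b : 'I_n2 * 'I_n1) : 'I_q :=
  if a.1 != b.1 then c2 a.1 b.1 else c1 a.2 b.2.

(* Main.v *)
Require Import Defs.
From mathcomp Require Import all_boot all_order.
From mathcomp Require Import zify.
Set Implicit Arguments. Unset Strict Implicit. Unset Printing Implicit Defensive.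

Lemma mono_cons (T : Type) (q : nat) (lt : rel T) (c : T -> T -> 'I_q)
  (S : {set 'I_q}) a l :
  mono_S_path lt c S (a :: l) =
  (if l is b :: _ then lt a b && (c a b \in S) else true) && mono_S_path lt c S l.
Proof.
case: l => [|b l] //=; rewrite /mono_S_path /=.
by case: (lt a b); case: (c a b \in S); case: (path lt b l) => //=; rewrite ?andbF.
Qed.

Lemma mono_cat (T : Type) (q : nat) (lt : rel T) (c : T -> T -> 'I_q)
  (S : {set 'I_q}) a s b t :
  mono_S_path lt c S (a :: s) -> mono_S_path lt c S (b :: t) ->
  lt (last a s) b -> c (last a s) b \in S ->
  mono_S_path lt c S (a :: s ++ b :: t).
Proof.
elim: s a => [|a' s IH] a /= H1 H2 H3 H4.
  by rewrite mono_cons H3 H4 H2.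
move: H1; rewrite mono_cons => /andP [/andP [h1 h2] h3].
by rewrite mono_cons /= h1 h2 IH.
Qed.

Lemma mono_map_pair q n1 n2 (c1 : 'I_n1 -> 'I_n1 -> 'I_q) (c2 : 'I_n2 -> 'I_n2 -> 'I_q)
  (S : {set 'I_q}) (u : 'I_n2) p :
  mono_S_path (@ord_lt n1) c1 S p ->
  mono_S_path (@lex_lt n2 n1) (lex_col c1 c2) S (map (pair u) p).
Proof.
elim: p => [|a p IH] //= H.
move: H; rewrite mono_cons => /andP [h1 h2].
rewrite mono_cons IH // andbT.
case: p h1 {IH h2} => //= b p /andP [h1 h2].
by rewrite /lex_lt /lex_col /= ltnn eqxx /=; rewrite /ord_lt in h1; rewrite h1 h2.
Qed.

Theorem proposition3p3 (q n1 n2 : nat)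
    (c1 : 'I_n1 -> 'I_n1 -> 'I_q) (c2 : 'I_n2 -> 'I_n2 -> 'I_q)
    (S : {set 'I_q}) (L1 L2 : nat) :
  longest_mono_S (@ord_lt n1) c1 S L1 ->
  longest_mono_S (@ord_lt n2) c2 S L2 ->
  longest_mono_S (@lex_lt n2 n1) (lex_col c1 c2) S (L1 * L2).
Proof.
move=> [[p1 [Hp1 Hs1]] M1] [[p2 [Hp2 Hs2]] M2]; split.
  exists [seq (u, x) | u <- p2, x <- p1]; split; last first.
    by rewrite size_allpairs Hs1 Hs2 mulnC.
  case: p1 Hp1 {Hs1} => [|x0 p1'] Hp1.
    by elim: p2 {Hp2 Hs2} => //=.
  elim: p2 Hp2 {Hs2} => [|u p2 IH] // H2.
  move: H2; rewrite mono_cons => /andP [h1 h2].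
  rewrite allpairs_cons.
  case: p2 h1 IH h2 => [|u' p2] h1 IH h2.
    by rewrite cats0 (mono_map_pair c2 u Hp1).
  move: h1 => /andP [h1 h1']; rewrite /ord_lt in h1.
  have := IH h2; rewrite allpairs_cons => IH'.
  apply: mono_cat => //.
  - exact: (mono_map_pair c2 u Hp1).
  - by rewrite last_map /lex_lt /= h1.
  - rewrite last_map /lex_col /=.
    have -> : (u != u') by rewrite -val_eqE /= neq_ltn h1.
    by [].
have key : forall x P, mono_S_path (@lex_lt n2 n1) (lex_col c1 c2) S (x :: P) ->
  exists Q R, [/\ mono_S_path (@ord_lt n2) c2 S (x.1 :: Q),
                  mono_S_path (@ord_lt n1) c1 S (x.2 :: R) &
                  size (x :: P) + L1 <= size (x.2 :: R) + L1 * size (x.1 :: Q)].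
  move=> x P; elim: P x => [|y P IH] x.
    by move=> _; exists [::], [::]; split => //=; lia.
  rewrite mono_cons => /andP [/andP [hl hc] hm].
  have [Q [R [hQ hR hs]]] := IH y hm.
  case: (eqVneq x.1 y.1) => e.
    exists Q, (y.2 :: R); split.
    - by rewrite e.
    - rewrite mono_cons hR andbT.
      move: hl hc; rewrite /ord_lt /lex_lt /lex_col e eqxx ltnn /= => -> -> //.
    - rewrite /= in hs *; lia.
  exists (y.1 :: Q), [::]; split => //.
  - rewrite mono_cons hQ andbT.
    move: hl hc; rewrite /ord_lt /lex_lt /lex_col e /=.
    have -> : (x.1 == y.1) = false by apply/negbTE.
    by rewrite orbF => -> ->.
  - have := M1 _ hR; rewrite /= in hs *; lia.
move=> [|x P] // HP.
have [Q [R [hQ hR hs]]] := key x P HP.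
have := M1 _ hR; have := M2 _ hQ; move: hs; set a := size _; set b := size _; set d := size _.
nia.
Qed.
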